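(* Assume the setting in the context (in particular Assumption (A)). Let $\rho>0$, $z_0\in V_f(\rho)$ and $\epsilon>0$, run Algorithm $\mathcal{A}_*$ from $z_0$ with accuracy $\epsilon$, and suppose $j_{out}\geq2$. Suppose that there exist an integer $T\in\{2,\dots,j_{out}\}$ and an integer $\ell\in\{0,\dots,j_{out}-T\}$ such that $m_{\ell+1}>\frac{1}{\sqrt{15}}m_{\ell+1+T}$. Then: (i) $s_j\in\left(0,\frac{\sqrt{15}}{4}\right]$ for all $j\in\{\ell+2,\dots,\ell+T\}$; (ii) $\sum_{j=\ell+2}^{\ell+T}\ln\left(\max\{1,(4s_j)^4\}\right)<4\ln15$; (iii) $\sum_{j=\ell+2}^{\ell+T}\ln\left(\frac{1}{s_j^2}-1\right)\leq\ln\left(1+\frac{f(z_0)-f^*}{\epsilon}\right)$; (iv) $T<5+\frac{1}{\ln15}\ln\left(1+\frac{f(z_0)-f^*}{\epsilon}\right)$.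
   Context: Let $f:\mathbb{R}^n\to(-\infty,\infty]$ be a proper closed convex function such that the problem $f^*=\min_{x\in\mathbb{R}^n}f(x)$ is solvable. Let $\Omega_f=\{x: f(x)=f^*\}$, fix a norm $\|\cdot\|$ on $\mathbb{R}^n$ with dual norm $\|y\|_*=\sup\{y^Tz:\|z\|\leq 1\}$, and for $x\in\mathbb{R}^n$ let $\bar x=\arg\min_{z\in\Omega_f}\|x-z\|$. For $\rho\geq0$ let $V_f(\rho)=\{x: f(x)-f^*\leq\rho\}$. Let $\mathcal{A}$ be an iterative algorithm: for $x_0\in\mathrm{dom} f$ and integer $k\geq1$, $\mathcal{A}(x_0,k)$ denotes its $k$-th iterate started from $x_0$ (and $\mathcal{A}(x_0,0)=x_0$). Assumption (A): (i) for every $\rho>0$ there is $\mu_\rho>0$ with $f(x_0)-f^*\geq\frac{\mu_\rho}{2}\|x_0-\bar x_0\|^2$ for all $x_0\in V_f(\rho)$; (ii) there exist $a_f>0$, $L_f>0$ and $g:\mathbb{R}^n\to\mathbb{R}^n$ with $g(x)=0\iff x\in\Omega_f$ such that for every $x_0\in\mathrm{dom} f$: $f(\mathcal{A}(x_0,1))\leq f(x_0)-\frac{1}{2L_f}\|g(x_0)\|_*^2$ and $f(\mathcal{A}(x_0,k))-f^*\leq\frac{a_f}{(k+1)^2}\|x_0-\bar x_0\|^2$ for all $k\geq1$; (iii) $\bar n_\rho:=\max\{\frac12,\sqrt{2a_f/\mu_\rho}\}$. Procedure $\mathcal{A}_d(r,n)$ (input $r\in\mathrm{dom} f$, $n\in\mathbb{R}$):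 set $x_0=r$, $k=0$. Repeat: $k\gets k+1$; set $x_k=\mathcal{A}(x_0,k)$ if $f(\mathcal{A}(x_0,k))\leq f(x_{k-1})$, and $x_k=x_{k-1}$ otherwise; $\ell=\lfloor k/2\rfloor$; until $k\geq n$ and $f(x_\ell)-f(x_k)\leq\frac13(f(x_0)-f(x_\ell))$. Output $z=x_k$, $m=k$. Algorithm $\mathcal{A}_*(z_0)$ (input $z_0\in\mathrm{dom} f$, $\epsilon>0$): set $m_0=1$, $m_{-1}=1$, $j=-1$. Repeat: $j\gets j+1$; $s_j=\sqrt{\frac{f(z_{j-1})-f(z_j)}{f(z_{j-2})-f(z_j)}}$ if $j\geq2$ and $s_j=0$ otherwise; $n_j=\max\{m_j,4s_jm_{j-1}\}$; $[z_{j+1},m_{j+1}]=\mathcal{A}_d(z_j,n_j)$; until $f(z_j)-f(z_{j+1})\leq\epsilon$. Output $z_{out}=z_{j+1}$, $j_{out}=j$. *)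

(* Defs.v *)
From mathcomp Require Import all_boot all_order all_algebra.
From mathcomp Require Import all_classical all_reals all_analysis.
Set Implicit Arguments. Unset Strict Implicit. Unset Printing Implicit Defensive.
Import Order.TTheory GRing.Theory Num.Theory.
Local Open Scope classical_set_scope.
Local Open Scope ring_scope.

Section Defs.
Variables (R : realType) (n : nat).
Notation vec := 'rV[R]_n.

Definition is_norm (N : vec -> R) : Prop :=
  [/\ forall x, N x = 0 -> x = 0,
      forall (a : R) x, N (a *: x) = `|a| * N x &
      forall x y, N (x + y) <= N x + N y].

Definition dotv (y z : vec) : R := \sum_(i < n) y ord0 i * z ord0 i.

Definition dual_norm (N : vec -> R) (y : vec) : R :=
  sup [set dotv y z | z in [set z : vec | N z <= 1]].

Definition proper_fun (f : vec -> \bar R) : Prop :=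
  (forall x, f x <> -oo%E) /\ exists x, f x <> +oo%E.

(* closed = lower semicontinuous (closed epigraph) *)
Definition closed_fun (N : vec -> R) (f : vec -> \bar R) : Prop :=
  forall (x : vec) (a : R), (a%:E < f x)%E ->
    exists2 d : R, 0 < d & forall y, N (y - x) < d -> (a%:E < f y)%E.

Definition convex_fun (f : vec -> \bar R) : Prop :=
  forall (x y : vec) (t : R), 0 < t < 1 ->
    (f (t *: x + (1 - t) *: y)%R <= t%:E * f x + (1 - t)%:E * f y)%E.

Definition is_min_value (f : vec -> \bar R) (fs : R) : Prop :=
  (exists x, f x = fs%:E) /\ forall x, (fs%:E <= f x)%E.

Definition argmin_set (f : vec -> \bar R) (fs : R) : set vec :=
  [set x | f x = fs%:E].

Definition is_proj (N : vec -> R) (Om : set vec) (xbar : vec -> vec) : Prop :=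
  forall x, Om (xbar x) /\ forall z, Om z -> N (x - xbar x) <= N (x - z).

Definition sublevel (f : vec -> \bar R) (fs rho : R) : set vec :=
  [set x | (f x <= (fs + rho)%:E)%E].

(* Assumption (A) (i)-(ii); (iii) only defines nbar_rho and is not needed. *)
Definition assumptionA (N : vec -> R) (f : vec -> \bar R) (fs : R)
    (xbar : vec -> vec) (A : vec -> nat -> vec) : Prop :=
  (forall rho : R, 0 < rho -> exists2 mu : R, 0 < mu &
     forall x0, sublevel f fs rho x0 ->
       ((fs + mu / 2 * N (x0 - xbar x0) ^+ 2)%:E <= f x0)%E) /\
  (exists (af Lf : R) (g : vec -> vec),
     [/\ 0 < af, 0 < Lf,
         (forall x, g x = 0 <-> argmin_set f fs x) &
         forall x0, f x0 <> +oo%E ->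
           (f (A x0 1%N) <= f x0 - (dual_norm N (g x0) ^+ 2 / (2 * Lf))%:E)%E /\
           (forall k : nat, (1 <= k)%N ->
              (f (A x0 k) <= (fs + af / ((k.+1)%:R ^+ 2) * N (x0 - xbar x0) ^+ 2)%:E)%E)]).

Fixpoint Ad_seq (f : vec -> \bar R) (A : vec -> nat -> vec) (r : vec) (k : nat)
  : vec :=
  match k with
  | 0 => r
  | k'.+1 => if (f (A r k'.+1) <= f (Ad_seq f A r k'))%E then A r k'.+1
             else Ad_seq f A r k'
  end.

(* the "until" test of A_d at counter value k (all values are finite since
   r \in dom f and the iterates are monotone, so [fine] is harmless) *)
Definition Ad_stop (f : vec -> \bar R) (A : vec -> nat -> vec) (r : vec)
    (nn : R) (k : nat) : Prop :=
  let x := Ad_seq f A r in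
  let l := k./2 in
  [/\ (1 <= k)%N, nn <= k%:R &
      fine (f (x l)) - fine (f (x k)) <= (fine (f (x 0%N)) - fine (f (x l))) / 3].

Definition Ad_out (f : vec -> \bar R) (A : vec -> nat -> vec) (r : vec)
    (nn : R) (z : vec) (m : nat) : Prop :=
  [/\ Ad_stop f A r nn m,
      (forall k, (k < m)%N -> ~ Ad_stop f A r nn k) &
      z = Ad_seq f A r m].

(* quantities of A_* built from the sequences z_j, m_j (j >= 0);
   m_{-1} = 1 = m_0, so m (j.-1) correctly represents m_{j-1} for all j *)
Definition s_coef (f : vec -> \bar R) (z : nat -> vec) (j : nat) : R :=
  if (2 <= j)%N then
    Num.sqrt ((fine (f (z j.-1)) - fine (f (z j))) /
              (fine (f (z j.-2)) - fine (f (z j))))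
  else 0.

Definition n_coef (f : vec -> \bar R) (z : nat -> vec) (m : nat -> nat) (j : nat)
  : R := Num.max (m j)%:R (4 * s_coef f z j * (m j.-1)%:R).

Definition Astar_run (f : vec -> \bar R) (A : vec -> nat -> vec) (eps : R)
    (z0 : vec) (z : nat -> vec) (m : nat -> nat) (J : nat) : Prop :=
  [/\ z 0%N = z0, m 0%N = 1%N,
      (forall j, (j <= J)%N ->
          Ad_out f A (z j) (n_coef f z m j) (z j.+1) (m j.+1)),
      (forall j, (j < J)%N -> eps < fine (f (z j)) - fine (f (z j.+1))) &
      fine (f (z J)) - fine (f (z J.+1)) <= eps].

End Defs.

(* Main.v *)
Require Import Defs.
From mathcomp Require Import all_boot all_order all_algebra.
From mathcomp Require Import all_classical all_reals all_analysis.
From mathcomp Require Import ring lra zify.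
Import Order.TTheory GRing.Theory Num.Theory.
Local Open Scope ring_scope.

Lemma fine_ge_aux (R : realType) (c d : R) (x : \bar R) :
  (c%:E <= x)%E -> (x <= d%:E)%E -> c <= fine x.
Proof. by case: x => [r| |] //=; rewrite ?lee_fin. Qed.

Lemma Ad_seq_le (R : realType) (n : nat) (f : 'rV[R]_n -> \bar R) A r k :
  (f (Ad_seq f A r k) <= f r)%E.
Proof.
elim: k => [|k IH] /=; first exact: lexx.
by case: ifP => [H|_] //; exact: le_trans H IH.
Qed.

Theorem lemma3 (R : realType) (n : nat) (N : 'rV[R]_n -> R)
  (f : 'rV[R]_n -> \bar R) (fs : R) (xbar : 'rV[R]_n -> 'rV[R]_n)
  (A : 'rV[R]_n -> nat -> 'rV[R]_n) :
  is_norm N -> proper_fun f -> closed_fun N f -> convex_fun f ->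
  is_min_value f fs -> is_proj N (argmin_set f fs) xbar ->
  (forall x, A x 0%N = x) ->
  assumptionA N f fs xbar A ->
  forall (rho : R) (z0 : 'rV[R]_n) (eps : R),
  0 < rho -> sublevel f fs rho z0 -> 0 < eps ->
  forall (z : nat -> 'rV[R]_n) (m : nat -> nat) (jout : nat),
  Astar_run f A eps z0 z m jout -> (2 <= jout)%N ->
  forall T l : nat, (2 <= T <= jout)%N -> (l <= jout - T)%N ->
  (m (l + 1 + T)%N)%:R / Num.sqrt (15 : R) < (m (l + 1)%N)%:R ->
  let s := s_coef f z in
  [/\ (forall j : nat, (l + 2 <= j <= l + T)%N -> 0 < s j <= Num.sqrt (15 : R) / 4),
      \sum_(l + 2 <= j < (l + T).+1) ln (Num.max 1 ((4 * s j) ^+ 4)) < 4 * ln (15 : R),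
      \sum_(l + 2 <= j < (l + T).+1) ln (1 / (s j) ^+ 2 - 1)
         <= ln (1 + (fine (f z0) - fs) / eps) &
      T%:R < 5 + ln (1 + (fine (f z0) - fs) / eps) / ln (15 : R)].
Proof.
move=> _ _ _ _ [_ fsmin] _ _ _ rho z0 eps rho0 z0sub eps0 z m jout
  [z00 m00 Hout Hdec Hlast] jout2 T l /andP[T2 TJ] lJ Hm s.
pose a j := fine (f (z j)).
have Hd : forall j, (j < jout)%N -> eps < a j - a j.+1 := Hdec.
have lTJ : (l + T <= jout)%N by lia.
have Hstep : forall j, (j <= jout)%N ->
   [/\ (m j <= m j.+1)%N, 4 * s j * (m j.-1)%:R <= (m j.+1)%:R
     & z j.+1 = Ad_seq f A (z j) (m j.+1)].
  move=> j /Hout [[_ Hn _] _ ->]; move: Hn; rewrite /n_coef ge_max => /andP[H1 H2].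
  by split => //; rewrite -(ler_nat R).
have mono : forall i k, (i <= k)%N -> (k <= jout.+1)%N -> (m i <= m k)%N.
  move=> i k ik; elim: k ik => [|k IH]; first by rewrite leqn0 => /eqP ->.
  rewrite leq_eqVlt => /orP[/eqP -> //|ik] kJ.
  apply: leq_trans (IH ik (ltnW kJ)) _; by case: (Hstep k kJ).
have mpos : forall j, (j <= jout.+1)%N -> (0 < m j)%N.
  by move=> j jJ; have := mono 0%N j (leq0n j) jJ; rewrite m00.
have a_le0 : forall i, (i <= jout)%N -> a i <= a 0%N.
  elim => [|i IH] iJ; first exact: lexx.
  have := Hd i iJ; have := IH (ltnW iJ); lra.
have fz : forall j, (j <= jout.+1)%N -> (f (z j) <= f z0)%E.
  elim => [|j IH] jJ; first by rewrite z00.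
  case: (Hstep j jJ) => _ _ ->; exact: le_trans (@Ad_seq_le _ _ f A _ _) (IH (ltnW jJ)).
have a_ge : forall j, (j <= jout.+1)%N -> fs <= a j.
  move=> j jJ; apply: (@fine_ge_aux _ _ (fs + rho)); first exact: fsmin.
  exact: le_trans (fz j jJ) z0sub.
have sE : forall k, (k.+2 <= jout)%N ->
  [/\ eps < a k - a k.+1, eps < a k.+1 - a k.+2,
      0 < s k.+2 & s k.+2 ^+ 2 = (a k.+1 - a k.+2) / (a k - a k.+2)].
  move=> k kJ; have h1 := Hd k (ltnW kJ); have h2 := Hd k.+1 kJ.
  have -> : s k.+2 = Num.sqrt ((a k.+1 - a k.+2) / (a k - a k.+2)) by [].
  have qp : 0 < (a k.+1 - a k.+2) / (a k - a k.+2) by apply: divr_gt0; lra.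
  split => //; first by rewrite sqrtr_gt0.
  by rewrite sqr_sqrtr // ltW.
have Mpos : 0 < (m (l+1)%N)%:R :> R by rewrite ltr0n mpos //; clear -lTJ T2; lia.
have sq15 : 0 < Num.sqrt (15:R) by rewrite sqrtr_gt0.
have e1 : (l + 1 + T = (l+T).+1)%N by clear -lTJ T2; clear -lTJ T2; lia.
have Hm' : (m (l+T).+1)%:R < (m (l+1)%N)%:R * Num.sqrt (15:R).
  by move: Hm; rewrite e1 ltr_pdivrMr.
have part1 : forall j, (l + 2 <= j <= l + T)%N -> 0 < s j <= Num.sqrt (15 : R) / 4.
  move=> j /andP[j1 j2]; case: j j1 j2 => [|[|k]] j1 j2; try (clear -j1 j2; lia).
  have [_ _ sp _] := sE k ltac:(clear -j1 j2 lTJ T2; lia).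
  rewrite sp /=.
  have [_ H1 _] := Hstep k.+2 ltac:(clear -j1 j2 lTJ T2; lia).
  have M1 : (m (l+1)%N <= m k.+1)%N by apply: mono; clear -j1 j2 lTJ T2; lia.
  have M2 : (m k.+3 <= m (l+T).+1)%N by apply: mono; clear -j1 j2 lTJ T2; lia.
  move: M1 M2; rewrite -!(ler_nat R) => M1 M2.
  move: H1 => /= H1.
  have hx : 4 * s k.+2 * (m (l+1)%N)%:R <= 4 * s k.+2 * (m k.+1)%:R.
    by apply: ler_wpM2l => //; rewrite mulr_ge0 // ltW.
  rewrite ler_pdivlMr // -(ler_pM2r Mpos); lra.
pose L i := ln ((m i)%:R : R).
have mposR : forall j, (j <= jout.+1)%N -> 0 < (m j)%:R :> R.
  by move=> j jJ; rewrite ltr0n mpos.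
have Lmono : forall i k, (i <= k)%N -> (k <= jout.+1)%N -> L i <= L k.
  move=> i k ik kJ; rewrite /L ler_ln ?posrE ?ler_nat ?mono ?mposR //; clear -ik kJ; lia.
have part2j : forall j, (l + 2 <= j < (l + T).+1)%N ->
  ln (Num.max 1 ((4 * s j) ^+ 4)) <= 4 * (L j.+1 - L j.-1).
  move=> j /andP[j1 j2]; case: j j1 j2 => [|[|k]] j1 j2; try (clear -j1 j2; lia).
  have [_ _ sp _] := sE k ltac:(clear -j1 j2 lTJ T2; lia).
  have [_ H1 _] := Hstep k.+2 ltac:(clear -j1 j2 lTJ T2; lia).
  move: H1 => /= H1.
  have x0 := mposR k.+1 ltac:(clear -j1 j2 lTJ T2; lia).
  have y0 := mposR k.+3 ltac:(clear -j1 j2 lTJ T2; lia).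
  have xy : L k.+1 <= L k.+3 by apply: Lmono; clear -j1 j2 lTJ T2; lia.
  have [Y1|Y1] := lerP ((4 * s k.+2) ^+ 4) 1.
    rewrite ln1; lra.
  rewrite lnXn; last by rewrite mulr_gt0.
  have h : ln (4 * s k.+2) <= L k.+3 - L k.+1.
    rewrite /L -ln_div ?posrE // ler_ln ?posrE ?divr_gt0 ?mulr_gt0 //.
    by rewrite ler_pdivlMr.
  have e4 : ln (4 * s k.+2) *+ 4 = 4 * ln (4 * s k.+2) by ring.
  rewrite e4; lra.
have tel2 : \sum_(l + 2 <= j < (l + T).+1) (4 * (L j.+1 - L j.-1))
   = 4 * ((L (l+T).+1 - L (l+2)%N) + (L (l+T)%N - L (l+1)%N)).
  have E1 := @telescope_sumr R (l+2)%N (l+T).+1 L ltac:(clear -lTJ T2; lia).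
  have E2 := @telescope_sumr R (l+2)%N (l+T).+1 (fun k => L k.-1) ltac:(clear -lTJ T2; lia).
  have e2 : ((l+2).-1 = l+1)%N by clear -lTJ T2; clear -lTJ T2; lia.
  rewrite /= e2 in E2.
  rewrite -mulr_sumr -E1 -E2 -big_split /=; congr (_ * _).
  by apply: eq_bigr => i _; lra.
have hL : 2 * L (l+T).+1 < ln 15 + 2 * L (l+1)%N.
  have M'0 := mposR (l+T).+1 ltac:(clear -lTJ T2; lia).
  have sqE : Num.sqrt (15:R) ^+ 2 = 15 by rewrite sqr_sqrtr.
  have : (m (l+T).+1)%:R ^+ 2 < 15 * (m (l+1)%N)%:R ^+ 2 :> R.
    have h2 : (m (l+T).+1)%:R ^+ 2 < ((m (l+1)%N)%:R * Num.sqrt 15) ^+ 2 :> R.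
      by rewrite !expr2; apply: ltr_pM => //; exact: ltW.
    by rewrite exprMn sqE mulrC in h2.
  rewrite -ltr_ln ?posrE ?exprn_gt0 ?mulr_gt0 ?exprn_gt0 //.
  rewrite lnM ?posrE ?exprn_gt0 // !lnXn // !mulr2n /L => h; lra.
have part2 : \sum_(l + 2 <= j < (l + T).+1) ln (Num.max 1 ((4 * s j) ^+ 4)) < 4 * ln (15 : R).
  apply: le_lt_trans (ler_sum_nat part2j) _.
  rewrite tel2.
  have := Lmono (l+1)%N (l+2)%N ltac:(clear -lTJ T2; lia) ltac:(clear -lTJ T2; lia).
  have := Lmono (l+T)%N (l+T).+1 ltac:(clear -lTJ T2; lia) ltac:(clear -lTJ T2; lia).
  lra.
have e2 : ((l+2).-1 = l+1)%N by clear -lTJ T2; lia.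
pose D i := ln (a i.-1 - a i).
have part3j : forall j, (l + 2 <= j < (l + T).+1)%N ->
  ln (1 / s j ^+ 2 - 1) = D j.-1 - D j.
  move=> j /andP[j1 j2]; case: j j1 j2 => [|[|k]] j1 j2; try (clear -j1 j2; lia).
  have [h1 h2 _ s2] := sE k ltac:(clear -j1 j2 lTJ T2; lia).
  rewrite s2 /D /=.
  have n1 : a k.+1 - a k.+2 != 0 by rewrite lt0r_neq0 //; lra.
  have n2 : a k - a k.+2 != 0 by rewrite lt0r_neq0 //; lra.
  have -> : 1 / ((a k.+1 - a k.+2) / (a k - a k.+2)) - 1
      = (a k - a k.+1) / (a k.+1 - a k.+2).
    by field; rewrite n1 n2.
  by rewrite ln_div ?posrE //; lra.
have tel3 : \sum_(l + 2 <= j < (l + T).+1) (D j.-1 - D j) = D (l+1)%N - D (l+T)%N.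
  have E2 := @telescope_sumr R (l+2)%N (l+T).+1 (fun k => D k.-1) ltac:(clear -lTJ T2; lia).
  rewrite /= e2 in E2.
  rewrite -[RHS]opprB -E2 -sumrN; apply: eq_bigr => i _ /=; lra.
have part3 : \sum_(l + 2 <= j < (l + T).+1) ln (1 / (s j) ^+ 2 - 1)
         <= ln (1 + (fine (f z0) - fs) / eps).
  rewrite (eq_big_nat _ _ part3j) tel3 /D.
  have e3 : ((l+1).-1 = l)%N by clear; lia.
  have e4 : ((l+T).-1.+1 = l+T)%N by clear -T2; lia.
  have hP : eps < a l - a (l+1)%N by rewrite addn1; apply: Hd; clear -lTJ T2; lia.
  have hQ := Hd (l+T).-1 ltac:(clear -lTJ T2; lia).
  rewrite e4 in hQ.
  have a0 := a_le0 l ltac:(clear -lTJ T2; lia).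
  have afs := a_ge (l+1)%N ltac:(clear -lTJ T2; lia).
  rewrite e3 -z00; change (fine (f (z 0%N))) with (a 0%N).
  rewrite -ln_div ?posrE; try lra.
  have w0 : 0 <= (a 0%N - fs) / eps by rewrite divr_ge0 //; lra.
  rewrite ler_ln ?posrE; try lra.
  rewrite ler_pdivrMr; last lra.
  have we : (a 0%N - fs) / eps * eps = a 0%N - fs by rewrite divfK // lt0r_neq0.
  nra.
  by apply: divr_gt0; lra.
have sqE : Num.sqrt (15:R) ^+ 2 = 15 by rewrite sqr_sqrtr.
have part4j : forall j, (l + 2 <= j < (l + T).+1)%N ->
  ln 15 <= ln (1 / s j ^+ 2 - 1) + ln (Num.max 1 ((4 * s j) ^+ 4)).
  move=> j jr; have /andP[sp sle] := part1 j jr.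
  have u15 : s j ^+ 2 <= 15 / 16.
    have -> : 15 / 16 = (Num.sqrt 15 / 4) ^+ 2 :> R.
      by rewrite expr_div_n sqE; field.
    by rewrite !expr2; apply: ler_pM => //; exact: ltW.
  have u0 : 0 < s j ^+ 2 by rewrite exprn_gt0.
  have un : s j ^+ 2 != 0 by rewrite lt0r_neq0.
  have sn : s j != 0 by rewrite lt0r_neq0.
  have -> : 1 / s j ^+ 2 - 1 = (1 - s j ^+ 2) / s j ^+ 2 by field; rewrite ?un ?sn.
  have X0 : 0 < (1 - s j ^+ 2) / s j ^+ 2 by rewrite divr_gt0 //; lra.
  have e44 : (4 * s j) ^+ 4 = 256 * (s j ^+ 2) ^+ 2 by ring.
  have [Y1|Y1] := lerP ((4 * s j) ^+ 4) 1.
    rewrite ln1 addr0 ler_ln ?posrE //; try lra.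
    rewrite ler_pdivlMr //.
    rewrite e44 in Y1.
    have : s j ^+ 2 <= 1 / 16 by nra.
    lra.
  rewrite -lnM ?posrE //; last by rewrite exprn_gt0 // mulr_gt0.
  rewrite ler_ln ?posrE ?mulr_gt0 ?exprn_gt0 ?mulr_gt0 ?invr_gt0 ?exprn_gt0 //; try lra.
  rewrite e44 in Y1 *.
  have -> : (1 - s j ^+ 2) / s j ^+ 2 * (256 * (s j ^+ 2) ^+ 2)
      = 256 * s j ^+ 2 * (1 - s j ^+ 2) by field; rewrite ?un ?sn.
  nra.
have sum15 : \sum_(l + 2 <= j < (l + T).+1) ln (15:R) = (T%:R - 1) * ln 15.
  rewrite sumr_const_nat.
  have -> : ((l+T).+1 - (l+2) = T - 1)%N by clear -T2; lia.
  rewrite -[ln 15 *+ _]mulr_natl natrB //; clear -T2; lia.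
have := ler_sum_nat part4j; rewrite big_split /= sum15 => H4.
have c0 : 0 < ln (15:R) by apply: ln_gt0; lra.
split => //.
set Lg := ln (1 + (fine (f z0) - fs) / eps).
have we : Lg / ln 15 * ln 15 = Lg by rewrite divfK // lt0r_neq0.
rewrite -(ltr_pM2r c0) mulrDl we.
move: part2 part3; rewrite -/Lg; nra.
Qed.
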